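(* Let $s=(\ell,\nu)\in S$, let $(\ell,\zeta)$ be a region with $(\ell,[\nu])\to_*(\ell,\zeta)$, let $a\in\mathit{Act}$, and let $F:\hat S\to\mathbb{R}$ be regionally quasi-simple. Then the function $F^\oplus_{s,\zeta,a}:I\to\mathbb{R}$, where $I=\{t\in\mathbb{R}_{\ge0}:\nu+t\in\zeta\}$, defined by $$F^\oplus_{s,\zeta,a}(t)=t+\sum_{(C,\ell')\in 2^{\mathcal{C}}\times L}\delta[\ell,a](C,\ell')\cdot F\big((\ell',(\nu+t)[C:=0]),(\ell',\zeta[C:=0])\big),$$ is continuous and nondecreasing.
   Context: Fix $k\in\mathbb{N}$ and a finite set of clocks $\mathcal{C}$; $V$ is the set of $\nu:\mathcal{C}\to[0,k]$; $\nu+t$ adds $t$ to every clock; $\nu[C:=0]$ resets the clocks in $C\subseteq\mathcal{C}$; $\|x\|_\infty=\max_i|x_i|$; $\overline{X}$ is the closure of $X$. A clock region is a maximal set of valuations satisfying exactly the same constraints $c\bowtie i$, $c-c'\bowtie i$ ($c,c'\in\mathcal{C}$, $i\in\{0,\dots,k\}$, $\bowtie\in\{<,>,=,\le,\ge\}$); $[\nu]$ is the region of $\nu$; $\zeta[C:=0]=[\nu[C:=0]]$ for $\nu\in\zeta$. Clock zones are convex unions of clock regions. A PTA is $\mathsf{T}=(L,L_F,\mathcal{C},\mathit{Inv},\mathit{Act},E,\delta)$ with finite locations $L$, final locations $L_F$, invariants $\mathit{Inv}:L\to$ clock zones, finite actions $\mathit{Act}$, enabledness $E:L\times\mathit{Act}\to$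 clock zones and $\delta:L\times\mathit{Act}\to\mathrm{Dist}(2^{\mathcal{C}}\times L)$. Its states are $S=\{(\ell,\nu):\nu\in\mathit{Inv}(\ell)\}$. A region is $(\ell,\zeta)$ with $\zeta\subseteq\mathit{Inv}(\ell)$ a clock region; $R\to_*R'$ iff some $(\ell,\nu)\in R$ and $t\ge0$ satisfy $(\ell,\nu+t)\in R'$. The boundary-region-graph state space is $\hat S=\{((\ell,\nu),(\ell,\zeta)):(\ell,\zeta)\text{ a region},\ \nu\in\overline{\zeta}\}$. For $\nu,\nu'\in V$, $\nu\unlhd\nu'$ iff there is $t\ge0$ such that for every clock $c$, $\nu'(c)-\nu(c)=t$ or $\nu'(c)=\nu(c)$, with $\nu'(c)-\nu(c)=t$ for at least one $c$; then $\nu'-\nu:=t$. $f:X\to\mathbb{R}$ is quasi-simple if it is Lipschitz w.r.t. $\|\cdot\|_\infty$ and whenever $\nu\unlhd\nu'$ in $X$, $f(\nu)\ge f(\nu')$ and $f(\nu)-f(\nu')\le\nu'-\nu$. $F:\hat S\to\mathbb{R}$ is regionally quasi-simple if for every region $(\ell,\zeta)$, $\nu\mapsto F((\ell,\nu),(\ell,\zeta))$ on $\overline{\zeta}$ is quasi-simple. *)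

(* Defs.v *)
From HB Require Import structures.
From mathcomp Require Import all_boot all_order all_algebra.
From mathcomp Require Import all_classical all_reals all_analysis.
Set Implicit Arguments. Unset Strict Implicit. Unset Printing Implicit Defensive.
Import Order.TTheory GRing.Theory Num.Theory.
Import numFieldNormedType.Exports.
Local Open Scope classical_set_scope.
Local Open Scope ring_scope.

Section PTA.
Variables (R : realType) (k : nat) (Clk : finType).

Definition valuation := Clk -> R.

Definition inV (x : valuation) : Prop := forall c, 0 <= x c <= k%:R.

Definition vshift (x : valuation) (t : R) : valuation := fun c => x c + t.

Definition vreset (x : valuation) (C : {set Clk}) : valuation :=
  fun c => if c \in C then 0 else x c.

Definition supdist (x y : valuation) : R := \big[Num.max/0]_(c : Clk) `|x c - y c|.

Inductive cmp := CLt | CLe | CEq | CGe | CGt.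
Definition cmp_eval (o : cmp) (a b : R) : bool :=
  match o with
  | CLt => a < b | CLe => a <= b | CEq => a == b | CGe => a >= b | CGt => a > b
  end.

Definition reg_equiv (x y : valuation) : Prop :=
  forall (o : cmp) (c c' : Clk) (i : nat), (i <= k)%N ->
    cmp_eval o (x c) i%:R = cmp_eval o (y c) i%:R /\
    cmp_eval o (x c - x c') i%:R = cmp_eval o (y c - y c') i%:R.

Definition reg_of (x : valuation) : set valuation :=
  [set y | inV y /\ reg_equiv y x].

Definition is_clock_region (Z : set valuation) : Prop :=
  exists2 x, inV x & Z = reg_of x.

(* zeta[C:=0] = [nu[C:=0]] for nu in zeta (union form, independent of choice) *)
Definition reset_region (Z : set valuation) (C : {set Clk}) : set valuation :=
  [set y | exists2 x, Z x & reg_of (vreset x C) y].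

Definition is_zone (Z : set valuation) : Prop :=
  [/\ Z `<=` inV,
      (forall x y (l : R), Z x -> Z y -> 0 <= l <= 1 ->
          Z (fun c => l * x c + (1 - l) * y c))
    & forall x, Z x -> reg_of x `<=` Z].

Definition sup_closure (Z : set valuation) : set valuation :=
  [set x | forall e : R, 0 < e -> exists2 y, Z y & supdist x y < e].

Definition lhd_by (x y : valuation) (t : R) : Prop :=
  [/\ 0 <= t, (forall c, y c - x c = t \/ y c = x c) & exists c, y c - x c = t].

Definition quasi_simple (X : set valuation) (f : valuation -> R) : Prop :=
  (exists K : R, forall x y, X x -> X y -> `|f x - f y| <= K * supdist x y) /\
  (forall x y t, X x -> X y -> lhd_by x y t -> f y <= f x /\ f x - f y <= t).

Definition is_dist (T : finType) (d : T -> R) : Prop :=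
  (forall x, 0 <= d x) /\ \sum_(x : T) d x = 1.

Variables (L Act : finType).

Definition is_pta (LF : {set L}) (Inv : L -> set valuation)
  (E : L -> Act -> set valuation) (delta : L -> Act -> ({set Clk} * L)%type -> R) : Prop :=
  [/\ forall l, is_zone (Inv l),
      forall l a, is_zone (E l a)
    & forall l a, is_dist (delta l a)].

Definition is_region (Inv : L -> set valuation) (l : L) (Z : set valuation) : Prop :=
  is_clock_region Z /\ Z `<=` Inv l.

Definition reaches (x : valuation) (Z : set valuation) : Prop :=
  exists y t, reg_of x y /\ 0 <= t /\ Z (vshift y t).

(* F : S^ -> R, where ((l,nu),(l,zeta)) is encoded as F l nu zeta;
   regionally quasi-simple *)
Definition regionally_qs (Inv : L -> set valuation)
  (F : L -> valuation -> set valuation -> R) : Prop :=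
  forall l Z, is_region Inv l Z -> quasi_simple (sup_closure Z) (fun x => F l x Z).

End PTA.

(* Main.v *)
Require Import Defs.
From HB Require Import structures.
From mathcomp Require Import all_boot all_order all_algebra.
From mathcomp Require Import all_classical all_reals all_analysis.
From mathcomp Require Import ring lra.
Import Order.TTheory GRing.Theory Num.Theory.
Import numFieldNormedType.Exports.
Local Open Scope classical_set_scope.
Local Open Scope ring_scope.
Set Implicit Arguments. Unset Strict Implicit.

Section Helpers.
Variables (R : realType) (k : nat) (Clk : finType).
Implicit Types (x y : valuation R Clk).

Lemma supdist_ge0 x y : 0 <= supdist x y.
Proof.
rewrite /supdist; apply: (big_ind (fun v => 0 <= v)) => //.
by move=> u v hu hv; rewrite le_max hu.
Qed.

Lemma supdist_le x y (d : R) : 0 <= d -> (forall c, `|x c - y c| <= d) ->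
  supdist x y <= d.
Proof.
move=> d0 H; rewrite /supdist; apply: (big_ind (fun v => v <= d)) => //.
by move=> u v hu hv; rewrite ge_max hu hv.
Qed.

Lemma supdist_xx x : supdist x x = 0.
Proof.
apply/le_anti; rewrite supdist_ge0 andbT; apply: supdist_le => // c.
by rewrite subrr normr0.
Qed.

Lemma reg_equiv_refl x : reg_equiv k x x.
Proof. by []. Qed.

Lemma reg_equiv_sym x y : reg_equiv k x y -> reg_equiv k y x.
Proof. by move=> H o c c' i hi; have [-> ->] := H o c c' i hi. Qed.

Lemma reg_equiv_trans x y z : reg_equiv k x y -> reg_equiv k y z -> reg_equiv k x z.
Proof.
by move=> H1 H2 o c c' i hi; have [-> ->] := H1 o c c' i hi; apply: H2.
Qed.

Lemma reg_of_eq x y : reg_equiv k x y -> reg_of k x = reg_of k y.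
Proof.
move=> H; apply/seteqP; split => z [hz e]; split => //.
  exact: reg_equiv_trans e H.
exact: reg_equiv_trans e (reg_equiv_sym H).
Qed.

Lemma neg_eval (a b : R) (i : nat) (o : cmp) : 0 <= a -> 0 <= b ->
  (forall o', cmp_eval o' a 0%:R = cmp_eval o' b 0%:R) ->
  cmp_eval o (0 - a) i%:R = cmp_eval o (0 - b) i%:R.
Proof.
move=> ha hb H; rewrite !sub0r; case: i => [|i].
  move: (H CLt) (H CLe) (H CEq) (H CGe) (H CGt); rewrite /= !mulr0n.
  move=> h1 h2 h3 h4 h5.
  case: o => /=; rewrite ?mulr0n ?oppr_lt0 ?oppr_le0 ?oppr_eq0 ?oppr_ge0 ?oppr_gt0 //.
have ha' : - a < i.+1%:R by rewrite (le_lt_trans _ (ltr0Sn _ _)) // oppr_le0.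
have hb' : - b < i.+1%:R by rewrite (le_lt_trans _ (ltr0Sn _ _)) // oppr_le0.
case: o => /=.
- by rewrite ha' hb'.
- by rewrite (ltW ha') (ltW hb').
- by rewrite (lt_eqF ha') (lt_eqF hb').
- by rewrite !leNgt ha' hb'.
- by rewrite !ltNge (ltW ha') (ltW hb').
Qed.

Lemma reg_equiv_reset x y (C : {set Clk}) : inV k x -> inV k y ->
  reg_equiv k x y -> reg_equiv k (vreset x C) (vreset y C).
Proof.
move=> hx hy e o c c' i hi; have [e1 e2] := e o c c' i hi.
rewrite /vreset; case: (c \in C); case: (c' \in C); split => //.
- apply: neg_eval; first by have /andP[] := hx c'.
    by have /andP[] := hy c'.
  by move=> o'; have [] := e o' c' c' 0 (leq0n _).
- by rewrite !subr0.
Qed.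

Lemma inV_reset x C : inV k x -> inV k (vreset x C).
Proof.
move=> hx c; rewrite /vreset; case: (c \in C) => //.
by rewrite lexx ler0n.
Qed.

Lemma reg_of_self x : inV k x -> reg_of k x x.
Proof. by []. Qed.

Lemma reset_region_eq x0 C : inV k x0 ->
  reset_region k (reg_of k x0) C = reg_of k (vreset x0 C).
Proof.
move=> h0; apply/seteqP; split => y.
  case=> x [hx ex] hy.
  by rewrite -(reg_of_eq (reg_equiv_reset C hx h0 ex)).
by move=> hy; exists x0.
Qed.

End Helpers.

Theorem lemma3 (R : realType) (k : nat) (Clk L Act : finType)
  (LF : {set L}) (Inv : L -> set (valuation R Clk))
  (E : L -> Act -> set (valuation R Clk))
  (delta : L -> Act -> ({set Clk} * L)%type -> R)
  (Hpta : is_pta k LF Inv E delta)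
  (l : L) (nu : valuation R Clk) (HnuV : inV k nu) (HnuInv : Inv l nu)
  (zeta : set (valuation R Clk)) (Hzeta : is_region k Inv l zeta)
  (Hreach : reaches k nu zeta)
  (a : Act)
  (F : L -> valuation R Clk -> set (valuation R Clk) -> R)
  (HF : regionally_qs k Inv F)
  (Hdef : forall (C : {set Clk}) (l' : L), 0 < delta l a (C, l') ->
            reset_region k zeta C `<=` Inv l') :
  let I := [set t : R | 0 <= t /\ zeta (vshift nu t)] in
  let Fplus : R -> R := fun t : R =>
    t + \sum_(p : ({set Clk} * L)%type)
          (delta l a p * F p.2 (vreset (vshift nu t) p.1) (reset_region k zeta p.1) : R) in
  {within I, continuous Fplus} /\
  (forall t1 t2, I t1 -> I t2 -> t1 <= t2 -> Fplus t1 <= Fplus t2).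
Proof.
move=> I Fplus.
case: Hpta => hInv _ /(_ l a) [d0 d1].
case: Hzeta => [[x0 hx0 ez] zInv].
have [hIV _ _] := hInv l.
have zV : forall x, zeta x -> inV k x by move=> x /zInv /hIV.
pose g (p : ({set Clk} * L)%type) (t : R) :=
  F p.2 (vreset (vshift nu t) p.1) (reset_region k zeta p.1).
have key : forall p, exists K : R, 0 <= K /\
    (forall t s, I t -> I s ->
       `|delta l a p * g p t - delta l a p * g p s| <= K * `|t - s|) /\
    (forall t s, I t -> I s -> t <= s ->
       delta l a p * g p t - delta l a p * g p s <= delta l a p * (s - t)).
  move=> [C l'].
  have := d0 (C, l'); rewrite le_eqVlt => /orP[/eqP dz|dpos].
    exists 0; rewrite -dz; split => //; split => *;
      by rewrite !mul0r ?subrr ?normr0.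
  have reg : is_region k Inv l' (reset_region k zeta C).
    split; last exact: Hdef.
    exists (vreset x0 C); first exact: inV_reset.
    by rewrite ez; apply: reset_region_eq.
  have [[K HK] Hmono] := HF _ _ reg.
  have mem : forall t, I t ->
      sup_closure (reset_region k zeta C) (vreset (vshift nu t) C).
    move=> t [_ zt] e e0; exists (vreset (vshift nu t) C).
      exists (vshift nu t) => //; apply: reg_of_self; apply: inV_reset.
      exact: zV.
    by rewrite supdist_xx.
  have sd : forall t s,
      supdist (vreset (vshift nu t) C) (vreset (vshift nu s) C) <= `|t - s|.
    move=> t s; apply: supdist_le => // c; rewrite /vreset /vshift.
    case: (c \in C); first by rewrite subrr normr0.
    by have -> : nu c + t - (nu c + s) = t - s by ring.
  exists (delta l a (C, l') * `|K|); split.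
    by rewrite mulr_ge0 // ltW.
  split.
    move=> t s It Is; rewrite -mulrBr normrM gtr0_norm // -mulrA.
    apply: ler_wpM2l; first exact: ltW.
    apply: (le_trans (HK _ _ (mem t It) (mem s Is))).
    apply: le_trans (ler_wpM2r (supdist_ge0 _ _) (ler_norm K)) _.
    by apply: ler_wpM2l; [exact: normr_ge0 | exact: sd].
  move=> t s It Is ts; rewrite -mulrBr; apply: ler_wpM2l; first exact: ltW.
  case: (boolP [exists c, c \notin C]) => [/existsP [c0 hc0]|/existsPn hall].
    have lhd : lhd_by (vreset (vshift nu t) C) (vreset (vshift nu s) C) (s - t).
      split; first by rewrite subr_ge0.
        move=> c; rewrite /vreset /vshift; case: (c \in C); first by right.
        by left; ring.
      by exists c0; rewrite /vreset /vshift (negbTE hc0); ring.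
    by have [_ ->] := Hmono _ _ _ (mem t It) (mem s Is) lhd.
  have ee : vreset (vshift nu t) C = vreset (vshift nu s) C.
    by apply/funext => c; rewrite /vreset (negbNE (hall c)).
  by rewrite /g /= ee subrr subr_ge0.
have [Kf HKf] := choice key.
have mono : forall t1 t2, I t1 -> I t2 -> t1 <= t2 -> Fplus t1 <= Fplus t2.
  move=> t s It Is ts.
  have : \sum_p (delta l a p * g p t - delta l a p * g p s)
      <= \sum_p delta l a p * (s - t).
    by apply: ler_sum => p _; apply: (HKf p).2.2.
  rewrite -big_distrl /= d1 mul1r sumrB => H.
  rewrite /Fplus; lra.
split => //.
pose M := 1 + \sum_p Kf p.
have M1 : 1 <= M.
  by rewrite /M lerDl sumr_ge0 // => p _; case: (HKf p).
have lip : forall t s, I t -> I s -> `|Fplus t - Fplus s| <= M * `|t - s|.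
  move=> t s It Is; rewrite /Fplus.
  have -> : forall (A B : R), t + A - (s + B) = (t - s) + (A - B)
    by move=> A B; ring.
  rewrite -sumrB; apply: (le_trans (ler_normD _ _)).
  rewrite /M mulrDl mul1r lerD2l big_distrl /=.
  apply: (le_trans (ler_norm_sum _ _ _)).
  by apply: ler_sum => p _; apply: (HKf p).2.1.
apply/subspace_continuousP => x Ix.
apply/cvgrPdist_lt => e e0.
have M0 : 0 < M by apply: lt_le_trans M1.
near=> t.
have It : I t by near: t; apply: withinT.
have dt : `|x - t| < e / M.
  near: t; apply: cvg_within.
  apply/nbhs_ballP; exists (e / M); first by rewrite /= divr_gt0.
  by move=> y; rewrite /ball /=.
have := lip x t Ix It.
move=> h; apply: (le_lt_trans h).
by rewrite -ltr_pdivlMl // mulrC.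
Unshelve. all: by end_near. Qed.
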